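(* Let $A=D[X,Y;\sigma,a]$ be a generalized Weyl algebra of rank $n$, where $D$ is a $K$-algebra, and let $\Delta=\{\mathrm{ad}_{X_1},\dots,\mathrm{ad}_{X_n}\}$ and $\Delta'=\{\mathrm{ad}_{Y_1},\dots,\mathrm{ad}_{Y_n}\}$. Then: (1) $A$ is a $\Delta$-locally nilpotent algebra if and only if the maps $\sigma_1-1,\dots,\sigma_n-1$ are locally nilpotent maps on $D$. (2) $A$ is a $\Delta'$-locally nilpotent algebra if and only if the maps $\sigma_1^{-1}-1,\dots,\sigma_n^{-1}-1$ are locally nilpotent maps on $D$.
   Context: Let $\sigma=(\sigma_1,\dots,\sigma_n)$ be commuting automorphisms of $D$ and $a=(a_1,\dots,a_n)$ elements of the centre of $D$ with $\sigma_i(a_j)=a_j$ for $i\ne j$. The generalized Weyl algebra $D[X,Y;\sigma,a]$ is the ring generated by $D$ and $X_1,\dots,X_n,Y_1,\dots,Y_n$ subject to $Y_iX_i=a_i$, $X_iY_i=\sigma_i(a_i)$, $X_id=\sigma_i(d)X_i$, $Y_id=\sigma_i^{-1}(d)Y_i$ ($d\in D$), and $[X_i,X_j]=[X_i,Y_j]=[Y_i,Y_j]=0$ for $i\ne j$. $\mathrm{ad}_x(f)=xf-fx$. For $i\ge1$, $\Delta^i=\{\delta_1\cdots\delta_i\mid\delta_j\in\Delta\}$; $A$ is $\Delta$-locally nilpotent if every $f\in A$ satisfies $\Delta^{i}f=0$ for some $i\ge1$. A map $g$ is locally nilpotent on $D$ if for every $d\in D$ there is $m$ with $g^m(d)=0$.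 *)

(* Defs.v *)
From HB Require Import structures.
From mathcomp Require Import all_boot all_order all_algebra.
Set Implicit Arguments. Unset Strict Implicit. Unset Printing Implicit Defensive.
Import GRing.Theory.
Local Open Scope ring_scope.

Definition is_alg_hom (K : fieldType) (A B : algType K) (f : A -> B) : Prop :=
  [/\ forall x y, f (x + y) = f x + f y,
      forall x y, f (x * y) = f x * f y,
      f 1 = 1 &
      forall (k : K) x, f (k *: x) = k *: f x].

Definition gwa_data (K : fieldType) (D : algType K) (n : nat)
  (sigma sigmainv : 'I_n -> D -> D) (a : 'I_n -> D) : Prop :=
  [/\ forall i, is_alg_hom (sigma i),
      forall i, cancel (sigma i) (sigmainv i) /\ cancel (sigmainv i) (sigma i),
      forall i j d, sigma i (sigma j d) = sigma j (sigma i d),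
      forall i d, a i * d = d * a i &
      forall i j, i != j -> sigma i (a j) = a j].

Definition gwa_relations (K : fieldType) (D : algType K) (n : nat)
  (sigma sigmainv : 'I_n -> D -> D) (a : 'I_n -> D)
  (B : algType K) (phi : D -> B) (x y : 'I_n -> B) : Prop :=
  is_alg_hom phi /\
  [/\ forall i, y i * x i = phi (a i),
      forall i, x i * y i = phi (sigma i (a i)),
      forall i d, x i * phi d = phi (sigma i d) * x i,
      forall i d, y i * phi d = phi (sigmainv i d) * y i &
      forall i j, i != j ->
        [/\ x i * x j = x j * x i, x i * y j = y j * x i & y i * y j = y j * y i]].

(* (A, iota, X, Y) is the generalized Weyl algebra D[X,Y;sigma,a]: the K-algebra
   generated by D and X_i, Y_i subject to the relations, i.e. the initial
   object among K-algebras equipped with such data (universal property of the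
   presentation). *)
Definition is_GWA (K : fieldType) (D : algType K) (n : nat)
  (sigma sigmainv : 'I_n -> D -> D) (a : 'I_n -> D)
  (A : algType K) (iota : D -> A) (X Y : 'I_n -> A) : Prop :=
  gwa_relations sigma sigmainv a iota X Y /\
  forall (B : algType K) (phi : D -> B) (x y : 'I_n -> B),
    gwa_relations sigma sigmainv a phi x y ->
    (exists f : A -> B, [/\ is_alg_hom f, forall d, f (iota d) = phi d,
                            forall i, f (X i) = x i & forall i, f (Y i) = y i]) /\
    (forall f g : A -> B,
       is_alg_hom f -> is_alg_hom g ->
       (forall d, f (iota d) = phi d) -> (forall d, g (iota d) = phi d) ->
       (forall i, f (X i) = x i) -> (forall i, g (X i) = x i) ->
       (forall i, f (Y i) = y i) -> (forall i, g (Y i) = y i) ->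
       forall u, f u = g u).

Definition ad (R : ringType) (x : R) (f : R) : R := x * f - f * x.

(* A is Delta-locally nilpotent for Delta = {ad_{Z_1},...,ad_{Z_n}}:
   every f is killed by Delta^i for some i >= 1, i.e. by every product
   delta_1 ... delta_i of i elements of Delta. *)
Definition ad_locally_nilpotent (R : ringType) (n : nat) (Z : 'I_n -> R) : Prop :=
  forall f : R, exists i : nat, (1 <= i)%N /\
    forall s : seq 'I_n, size s = i -> foldr (fun j g => ad (Z j) g) f s = 0.

Definition locally_nilpotent_map (R : ringType) (g : R -> R) : Prop :=
  forall d : R, exists m : nat, iter m g d = 0.

(* Main.v *)
Require Import Defs.
From HB Require Import structures.
From mathcomp Require Import all_boot all_order all_algebra.
From mathcomp Require Import boolp.
Set Implicit Arguments. Unset Strict Implicit. Unset Printing Implicit Defensive.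
Import GRing.Theory.
Local Open Scope ring_scope.

Section EndoAlg.
Variables (K : fieldType) (D : algType K).

Record endo := Endo { ef :> D -> D;
  ef_lin : forall (k : K) x y, ef (k *: x + y) = k *: ef x + ef y }.

Lemma endo_ext (e1 e2 : endo) : (forall x, e1 x = e2 x) -> e1 = e2.
Proof.
case: e1 e2 => f1 p1 [f2 p2] /= H.
have E : f1 = f2 by apply: funext.
subst f2; by rewrite (Prop_irrelevance p1 p2).
Qed.

Lemma efD (e : endo) x y : e (x + y) = e x + e y.
Proof. by have := ef_lin e 1 x y; rewrite !scale1r. Qed.
Lemma ef0 (e : endo) : e 0 = 0.
Proof. by apply: (addrI (e 0)); rewrite -efD !addr0. Qed.
Lemma efZ (e : endo) k x : e (k *: x) = k *: e x.
Proof. by rewrite -[k *: x]addr0 ef_lin ef0 addr0. Qed.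
Lemma efN (e : endo) x : e (- x) = - e x.
Proof. by apply: (addrI (e x)); rewrite -efD !subrr ef0. Qed.

HB.instance Definition _ := gen_eqMixin endo.
HB.instance Definition _ := gen_choiceMixin endo.

Lemma e0_lin (k : K) (x y : D) : (fun _ : D => 0 : D) (k *: x + y) = k *: (fun _ : D => 0 : D) x + (fun _ : D => 0 : D) y.
Proof. by rewrite scaler0 addr0. Qed.
Definition e0 : endo := Endo e0_lin.
Lemma eopp_lin (e : endo) k x y : - e (k *: x + y) = k *: (- e x) + (- e y).
Proof. by rewrite ef_lin opprD scalerN. Qed.
Definition eopp (e : endo) : endo := @Endo (fun x => - e x) (eopp_lin e).
Lemma eadd_lin (f g : endo) k x y : f (k *: x + y) + g (k *: x + y) = k *: (f x + g x) + (f y + g y).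
Proof. by rewrite !ef_lin scalerDr addrACA. Qed.
Definition eadd (f g : endo) : endo := @Endo (fun x => f x + g x) (eadd_lin f g).
Lemma e1_lin k (x y : D) : id (k *: x + y) = k *: id x + id y.
Proof. by []. Qed.
Definition e1 : endo := @Endo id e1_lin.
Lemma emul_lin (f g : endo) k x y : f (g (k *: x + y)) = k *: f (g x) + f (g y).
Proof. by rewrite !ef_lin. Qed.
Definition emul (f g : endo) : endo := @Endo (fun x => f (g x)) (emul_lin f g).
Lemma escale_lin (c : K) (e : endo) k x y : c *: e (k *: x + y) = k *: (c *: e x) + c *: e y.
Proof. by rewrite ef_lin scalerDr !scalerA mulrC. Qed.
Definition escale (c : K) (e : endo) : endo := @Endo (fun x => c *: e x) (escale_lin c e).

Lemma e1_neq0 : e1 != e0.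
Proof.
apply/eqP => /(congr1 (fun e : endo => e 1)) /= /eqP; by rewrite oner_eq0.
Qed.

Lemma eaddA : associative eadd. Proof. by move=> a b c; apply: endo_ext => x /=; rewrite addrA. Qed.
Lemma eaddC : commutative eadd. Proof. by move=> a b; apply: endo_ext => x /=; rewrite addrC. Qed.
Lemma eadd0 : left_id e0 eadd. Proof. by move=> a; apply: endo_ext => x /=; rewrite add0r. Qed.
Lemma eaddN : left_inverse e0 eopp eadd. Proof. by move=> a; apply: endo_ext => x /=; rewrite addNr. Qed.
Lemma emulA : associative emul. Proof. by move=> a b c; apply: endo_ext. Qed.
Lemma emul1 : left_id e1 emul. Proof. by move=> a; apply: endo_ext. Qed.
Lemma emulr1 : right_id e1 emul. Proof. by move=> a; apply: endo_ext. Qed.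
Lemma emulDl : left_distributive emul eadd. Proof. by move=> a b c; apply: endo_ext. Qed.
Lemma emulDr : right_distributive emul eadd. Proof. by move=> a b c; apply: endo_ext => x /=; rewrite efD. Qed.

HB.instance Definition _ := GRing.isNzRing.Build endo
  eaddA eaddC eadd0 eaddN emulA emul1 emulr1 emulDl emulDr e1_neq0.

Lemma escaleA a b (v : endo) : escale a (escale b v) = escale (a * b) v.
Proof. by apply: endo_ext => x /=; rewrite scalerA. Qed.
Lemma escale1 : left_id 1 escale. Proof. by move=> a; apply: endo_ext => x /=; rewrite scale1r. Qed.
Lemma escaleDr : right_distributive escale +%R.
Proof. by move=> a u v; apply: endo_ext => x /=; rewrite scalerDr. Qed.
Lemma escaleDl (v : endo) : {morph escale^~ v: a b / a + b}.
Proof. by move=> a b; apply: endo_ext => x /=; rewrite scalerDl. Qed.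

HB.instance Definition _ := GRing.Zmodule_isLmodule.Build K endo escaleA escale1 escaleDr escaleDl.

Lemma escaleAl (a : K) (u v : endo) : a *: (u * v) = (a *: u) * v.
Proof. by apply: endo_ext. Qed.
HB.instance Definition _ := GRing.Lmodule_isLalgebra.Build K endo escaleAl.
Lemma escaleAr (a : K) (u v : endo) : a *: (u * v) = u * (a *: v).
Proof. by apply: endo_ext => x /=; rewrite efZ. Qed.
HB.instance Definition _ := GRing.Lalgebra_isAlgebra.Build K endo escaleAr.

End EndoAlg.

Section Nilp.
Variables (K : fieldType) (A : algType K) (n : nat) (Z : 'I_n -> A).

Definition Fw (f : A) (s : seq 'I_n) := foldr (fun j g => ad (Z j) g) f s.
Definition nilp (f : A) := exists N, forall s, (N <= size s)%N -> Fw f s = 0.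

Lemma ad0 (z : A) : ad z 0 = 0. Proof. by rewrite /ad mul0r mulr0 subrr. Qed.
Lemma adD (z u v : A) : ad z (u + v) = ad z u + ad z v.
Proof. by rewrite /ad mulrDr mulrDl opprD addrACA. Qed.
Lemma adZ (z : A) (k : K) (u : A) : ad z (k *: u) = k *: ad z u.
Proof. by rewrite /ad scalerBr -scalerAl -scalerAr. Qed.
Lemma adM (z u v : A) : ad z (u * v) = ad z u * v + u * ad z v.
Proof.
rewrite /ad mulrBl mulrBr !mulrA addrA; congr (_ + _).
by rewrite addrNK.
Qed.

Lemma Fw0 s : Fw 0 s = 0. Proof. by elim: s => //= j s ->; rewrite ad0. Qed.
Lemma FwD u v s : Fw (u + v) s = Fw u s + Fw v s.
Proof. by elim: s => //= j s ->; rewrite adD. Qed.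
Lemma FwZ k u s : Fw (k *: u) s = k *: Fw u s.
Proof. by elim: s => //= j s ->; rewrite adZ. Qed.
Lemma Fw_rcons f s j : Fw f (rcons s j) = Fw (ad (Z j) f) s.
Proof. by rewrite /Fw foldr_rcons. Qed.
Lemma Fw_cat f s t : Fw f (s ++ t) = Fw (Fw f t) s.
Proof. by rewrite /Fw foldr_cat. Qed.

Lemma nilp0 : nilp 0.
Proof. by exists 0%N => s _; rewrite Fw0. Qed.

Lemma nilpD u v : nilp u -> nilp v -> nilp (u + v).
Proof.
move=> [N1 H1] [N2 H2]; exists (maxn N1 N2) => s Hs.
rewrite FwD H1 ?H2 ?addr0 //; apply: leq_trans Hs; by rewrite ?leq_maxl ?leq_maxr.
Qed.

Lemma nilpZ k u : nilp u -> nilp (k *: u).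
Proof. by move=> [N H]; exists N => s Hs; rewrite FwZ H ?scaler0. Qed.

Lemma FwM_aux s : forall Nu Nv u v,
  (forall t, (Nu <= size t)%N -> Fw u t = 0) ->
  (forall t, (Nv <= size t)%N -> Fw v t = 0) ->
  (Nu + Nv <= size s)%N -> Fw (u * v) s = 0.
Proof.
elim/last_ind: s => [|s j IH] Nu Nv u v Hu Hv Hs.
  move: Hs; rewrite leqn0 addn_eq0 => /andP[/eqP E _]; subst Nu.
  by have := Hu [::] (leqnn 0) => /= ->; rewrite mul0r.
case: Nu Hu Hs => [|Nu] Hu Hs.
  by have := Hu [::] (leqnn 0) => /= ->; rewrite mul0r Fw0.
case: Nv Hv Hs => [|Nv] Hv Hs.
  by have := Hv [::] (leqnn 0) => /= ->; rewrite mulr0 Fw0.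
rewrite Fw_rcons adM FwD.
have ->: Fw (ad (Z j) u * v) s = 0.
  apply: (IH Nu Nv.+1) => //.
    by move=> t Ht; rewrite -Fw_rcons Hu // size_rcons.
  by move: Hs; rewrite size_rcons addSn ltnS.
have ->: Fw (u * ad (Z j) v) s = 0.
  apply: (IH Nu.+1 Nv) => //.
    by move=> t Ht; rewrite -Fw_rcons Hv // size_rcons.
  by move: Hs; rewrite size_rcons addnS ltnS.
by rewrite addr0.
Qed.

Lemma nilpM u v : nilp u -> nilp v -> nilp (u * v).
Proof. by move=> [N1 H1] [N2 H2]; exists (N1 + N2)%N => s Hs; apply: FwM_aux H1 H2 Hs. Qed.

Lemma nilp1 : nilp 1.
Proof.
exists 1%N => s; case/lastP: s => [|s k] // _.
by rewrite Fw_rcons {1}/ad mulr1 mul1r subrr Fw0.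
Qed.

Lemma nilp_ad f : (forall i, nilp (ad (Z i) f)) -> nilp f.
Proof.
move=> H; have [N HN] := fin_all_exists H.
exists (\max_i N i).+1 => s; case/lastP: s => [|s k] //.
rewrite size_rcons ltnS => Hs; rewrite Fw_rcons HN //.
by apply: leq_trans Hs; apply: leq_bigmax.
Qed.

Lemma nilp_aln : (forall f, nilp f) -> ad_locally_nilpotent Z.
Proof.
move=> H f; have [N HN] := H f; exists N.+1; split => // s Hs.
by apply: HN; rewrite Hs.
Qed.

Lemma aln_nilp f : ad_locally_nilpotent Z -> nilp f.
Proof.
move=> H; have [N [_ HN]] := H f; exists N => s Hs.
rewrite -(cat_take_drop (size s - N) s) Fw_cat.
have ->: Fw f (drop (size s - N) s) = 0 by apply: HN; rewrite size_drop subKn.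
exact: Fw0.
Qed.

Definition Pn : {pred A} := fun f => `[< nilp f >].

Lemma Pn_closed : GRing.subsemialg_closed Pn.
Proof.
split.
- by apply/asboolP; exact: nilp1.
- split; first by apply/asboolP; exact: nilp0.
  by move=> u v /asboolP Hu /asboolP Hv; apply/asboolP; apply: nilpD.
- by move=> k u /asboolP Hu; apply/asboolP; apply: nilpZ.
- by move=> u v /asboolP Hu /asboolP Hv; apply/asboolP; apply: nilpM.
Qed.

HB.instance Definition _ := GRing.isSubalgClosed.Build K A Pn Pn_closed.

Definition Sn := {f : A | f \in Pn}.
HB.instance Definition _ := [isSub of Sn for (@sval A (fun f => f \in Pn))].
HB.instance Definition _ := [Choice of Sn by <:].
HB.instance Definition _ := [SubChoice_isSubAlgebra of Sn by <:].


End Nilp.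

Section AlgHom.
Variables (K : fieldType) (A B : algType K) (f : A -> B) (Hf : is_alg_hom f).

Lemma homD x y : f (x + y) = f x + f y. Proof. by case: Hf. Qed.
Lemma homM x y : f (x * y) = f x * f y. Proof. by case: Hf. Qed.
Lemma hom1 : f 1 = 1. Proof. by case: Hf. Qed.
Lemma homZ k x : f (k *: x) = k *: f x. Proof. by case: Hf. Qed.
Lemma hom0 : f 0 = 0.
Proof. by apply: (addrI (f 0)); rewrite -homD !addr0. Qed.
Lemma homN x : f (- x) = - f x.
Proof. by apply: (addrI (f x)); rewrite -homD !subrr hom0. Qed.
Lemma homB x y : f (x - y) = f x - f y. Proof. by rewrite homD homN. Qed.
Lemma homX x m : f (x ^+ m) = f x ^+ m.
Proof. by elim: m => [|m IH]; rewrite ?expr0 ?hom1 // !exprS homM IH. Qed.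
End AlgHom.

Lemma alg_hom_inv (K : fieldType) (A : algType K) (f g : A -> A) :
  is_alg_hom f -> cancel f g -> cancel g f -> is_alg_hom g.
Proof.
move=> Hf fK gK; split.
- by move=> x y; apply: (can_inj fK); rewrite (homD Hf) !gK.
- by move=> x y; apply: (can_inj fK); rewrite (homM Hf) !gK.
- by apply: (can_inj fK); rewrite (hom1 Hf) !gK.
- by move=> k x; apply: (can_inj fK); rewrite (homZ Hf) !gK.
Qed.

Lemma alg_hom_id (K : fieldType) (A : algType K) : is_alg_hom (@id A).
Proof. by []. Qed.

Lemma comm_inv (T : Type) (f g h : T -> T) :
  cancel f g -> cancel g f -> (forall x, f (h x) = h (f x)) ->
  forall x, g (h x) = h (g x).
Proof. by move=> fK gK H x; rewrite -{1}(gK x) -H fK. Qed.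
Section T.
Variables (K : fieldType) (A : algType K) (n : nat) (Z : 'I_n -> A).
Lemma valM (u v : Sn Z) : val (u * v) = val u * val v. Proof. by []. Qed.
Lemma valD (u v : Sn Z) : val (u + v) = val u + val v. Proof. by []. Qed.
Lemma val1 : val (1 : Sn Z) = 1. Proof. by []. Qed.
Lemma valZ k (u : Sn Z) : val (k *: u) = k *: val u. Proof. by []. Qed.
Lemma inPn f : nilp Z f -> f \in Pn Z. Proof. by move=> H; apply/asboolP. Qed.
Lemma Pnin f : f \in Pn Z -> nilp Z f. Proof. by move/asboolP. Qed.
End T.

Section GWA.
Variables (K : fieldType) (D : algType K) (n : nat)
  (sigma sigmainv : 'I_n -> D -> D) (a : 'I_n -> D).
Hypothesis Hd : gwa_data sigma sigmainv a.

Lemma sg_hom i : is_alg_hom (sigma i). Proof. by case: Hd. Qed.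
Lemma sgK i : cancel (sigma i) (sigmainv i). Proof. by case: Hd => _ H _ _ _; case: (H i). Qed.
Lemma sgiK i : cancel (sigmainv i) (sigma i). Proof. by case: Hd => _ H _ _ _; case: (H i). Qed.
Lemma sg_comm i j d : sigma i (sigma j d) = sigma j (sigma i d). Proof. by case: Hd. Qed.
Lemma a_cent i d : a i * d = d * a i. Proof. by case: Hd. Qed.
Lemma sg_fix i j : i != j -> sigma i (a j) = a j. Proof. by case: Hd => _ _ _ _; apply. Qed.
Lemma sgi_hom i : is_alg_hom (sigmainv i).
Proof. exact: alg_hom_inv (sg_hom i) (sgK i) (sgiK i). Qed.
Lemma sg_sgi i j d : sigma i (sigmainv j d) = sigmainv j (sigma i d).
Proof. by apply/esym; apply: (comm_inv (sgK j) (sgiK j)) => x; rewrite sg_comm. Qed.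
Lemma sgi_comm i j d : sigmainv i (sigmainv j d) = sigmainv j (sigmainv i d).
Proof. by apply: (comm_inv (sgK i) (sgiK i)) => x; rewrite -sg_sgi. Qed.
Lemma sgi_fix i j : i != j -> sigmainv i (a j) = a j.
Proof. by move=> ij; rewrite -{1}(sg_fix ij) sgK. Qed.

Definition a' i := sigma i (a i).

Lemma swap_data : gwa_data sigmainv sigma a'.
Proof.
split.
- exact: sgi_hom.
- by move=> i; split; [exact: sgiK | exact: sgK].
- exact: sgi_comm.
- move=> i d; by rewrite /a' -(sgiK i d) -!(homM (sg_hom i)) a_cent.
- by move=> i j ij; rewrite /a' -sg_sgi sgi_fix.
Qed.

Lemma swap_rel (B : algType K) (phi : D -> B) (x y : 'I_n -> B) :
  gwa_relations sigma sigmainv a phi x y ->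
  gwa_relations sigmainv sigma a' phi y x.
Proof.
case=> Hphi [H1 H2 H3 H4 H5]; split => //; split.
- exact: H2.
- by move=> i; rewrite /a' sgK.
- exact: H4.
- exact: H3.
- move=> i j ij; have [E1 E2 E3] := H5 i j ij.
  have [F1 F2 F3] := H5 j i (ltac:(by rewrite eq_sym)).
  by split.
Qed.

Lemma swap_rel' (B : algType K) (phi : D -> B) (x y : 'I_n -> B) :
  gwa_relations sigmainv sigma a' phi y x ->
  gwa_relations sigma sigmainv a phi x y.
Proof.
case=> Hphi [H1 H2 H3 H4 H5]; split => //; split.
- by move=> i; rewrite H2 /a' sgK.
- exact: H1.
- exact: H4.
- exact: H3.
- move=> i j ij; have [E1 E2 E3] := H5 i j ij.
  have [F1 F2 F3] := H5 j i (ltac:(by rewrite eq_sym)).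
  by split.
Qed.

Lemma swap_GWA (A : algType K) (iota : D -> A) (X Y : 'I_n -> A) :
  is_GWA sigma sigmainv a iota X Y -> is_GWA sigmainv sigma a' iota Y X.
Proof.
case=> Hr HU; split; first exact: swap_rel.
move=> B phi x y /swap_rel' Hr'; have [[h [H1 H2 H3 H4]] Hu] := HU B phi y x Hr'.
split; first by exists h.
move=> f g Hf Hg Hf1 Hg1 Hf2 Hg2 Hf3 Hg3; exact: Hu.
Qed.

Lemma mulE (e1 e2 : endo D) v : (e1 * e2) v = e1 (e2 v). Proof. by []. Qed.
Lemma addE (e1 e2 : endo D) v : (e1 + e2) v = e1 v + e2 v. Proof. by []. Qed.
Lemma oneE v : (1 : endo D) v = v. Proof. by []. Qed.
Lemma scaleE k (e : endo D) v : (k *: e) v = k *: e v. Proof. by []. Qed.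
Lemma zeroE v : (0 : endo D) v = 0. Proof. by []. Qed.

Lemma Lmul_lin (d : D) (k : K) x y : d * (k *: x + y) = k *: (d * x) + d * y.
Proof. by rewrite mulrDr scalerAr. Qed.
Definition Lmul (d : D) : endo D := Endo (Lmul_lin d).
Lemma hom_lin (f : D -> D) : is_alg_hom f -> forall (k : K) x y, f (k *: x + y) = k *: f x + f y.
Proof. by move=> Hf k x y; rewrite (homD Hf) (homZ Hf). Qed.
Definition Sg i : endo D := Endo (hom_lin (sg_hom i)).
Definition Sgi i : endo D := Endo (hom_lin (sgi_hom i)).
Definition Yr i := Lmul (a i) * Sgi i.

Lemma rep_rel : gwa_relations sigma sigmainv a Lmul Sg Yr.
Proof.
split.
  split.
  - by move=> x y; apply: endo_ext => v; rewrite addE /= mulrDl.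
  - by move=> x y; apply: endo_ext => v; rewrite mulE /= mulrA.
  - by apply: endo_ext => v; rewrite oneE /= mul1r.
  - by move=> k x; apply: endo_ext => v; rewrite scaleE /= scalerAl.
split.
- by move=> i; apply: endo_ext => v; rewrite !mulE /= sgK.
- by move=> i; apply: endo_ext => v; rewrite !mulE /= (homM (sg_hom i)) sgiK.
- by move=> i d; apply: endo_ext => v; rewrite !mulE /= (homM (sg_hom i)).
- move=> i d; apply: endo_ext => v; rewrite !mulE /= (homM (sgi_hom i)).
  by rewrite !mulrA a_cent.
- move=> i j ij; split.
  + by apply: endo_ext => v; rewrite !mulE /= sg_comm.
  + by apply: endo_ext => v; rewrite !mulE /= (homM (sg_hom i)) sg_fix // sg_sgi.
  + apply: endo_ext => v; rewrite !mulE /= (homM (sgi_hom i)) (homM (sgi_hom j)).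
    have ji : j != i by rewrite eq_sym.
    by rewrite (sgi_fix ij) (sgi_fix ji) sgi_comm !mulrA (a_cent i (a j)).
Qed.

Definition tau i (d : D) := sigma i d - d.

Lemma Fw_iota (A : algType K) (iota : D -> A) (X Y : 'I_n -> A) :
  gwa_relations sigma sigmainv a iota X Y ->
  forall i d m, Fw X (iota d) (nseq m i) = iota (iter m (tau i) d) * X i ^+ m.
Proof.
case=> Hi [_ _ H3 _ _] i d; elim=> [|m IH] /=; first by rewrite expr0 mulr1.
rewrite IH /ad mulrA H3 -mulrA -exprS -mulrA -exprSr -mulrBl.
by rewrite /tau (homB Hi).
Qed.

Lemma endo_exp (e : endo D) m v : (e ^+ m) v = iter m e v.
Proof. by elim: m => [|m IH] //=; rewrite exprS mulE IH. Qed.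

Lemma dir1 (A : algType K) (iota : D -> A) (X Y : 'I_n -> A) :
  is_GWA sigma sigmainv a iota X Y ->
  ad_locally_nilpotent X -> forall i, locally_nilpotent_map (tau i).
Proof.
move=> [Hr HU] HX i d.
have [N [_ HN]] := HX (iota d).
exists N.
have E0 := HN (nseq N i) (size_nseq _ _).
have := Fw_iota Hr i d N; rewrite /Fw E0 => E1.
have [[f [Hf Hf1 Hf2 Hf3]] _] := HU _ _ _ _ rep_rel.
have := congr1 f E1; rewrite (hom0 Hf) (homM Hf) (homX Hf) Hf1 Hf2.
move/(congr1 (fun e : endo D => e (iter N (sigmainv i) 1))).
rewrite zeroE mulE endo_exp /=.
have -> : iter N (Sg i) (iter N (sigmainv i) 1) = 1.
  elim: N {HN E0 E1} 1 => [|N IH] v //.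
  by rewrite iterSr iterS /= sgiK.
by rewrite mulr1 => ->.
Qed.

Lemma tau0 i : tau i 0 = 0.
Proof. by rewrite /tau (hom0 (sg_hom i)) subrr. Qed.

Lemma tau_comm i j d : tau i (tau j d) = tau j (tau i d).
Proof.
rewrite /tau !(homB (sg_hom _)) sg_comm.
rewrite -!addrA; congr (_ + _).
by rewrite !opprB addrCA [in RHS]addrCA; congr (_ + _); exact: addrC.
Qed.

Lemma iter_tau_comm i j m d : iter m (tau i) (tau j d) = tau j (iter m (tau i) d).
Proof. by elim: m => [|m IH] //=; rewrite IH tau_comm. Qed.

Section Rel.
Variables (A : algType K) (iota : D -> A) (X Y : 'I_n -> A).
Hypothesis Hr : gwa_relations sigma sigmainv a iota X Y.

Lemma iota_hom : is_alg_hom iota. Proof. by case: Hr. Qed.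

Lemma nilpX j : nilp X (X j).
Proof.
exists 1%N => s; case/lastP: s => [|s k] // _; rewrite Fw_rcons.
have -> : ad (X k) (X j) = 0.
  case: (eqVneq k j) => [->|kj]; first by rewrite /ad subrr.
  case: Hr => _ [_ _ _ _ H5]; have [E _ _] := H5 k j kj; by rewrite /ad E subrr.
exact: Fw0.
Qed.

Lemma ad_iota j e : ad (X j) (iota e) = iota (tau j e) * X j.
Proof.
case: Hr => Hi [_ _ H3 _ _].
by rewrite /ad H3 -mulrBl /tau (homB Hi).
Qed.

Lemma nilp_iota : (forall i, locally_nilpotent_map (tau i)) -> forall d, nilp X (iota d).
Proof.
move=> Hln d.
have [b Hb] := fin_all_exists (fun i => Hln i d).
suff H : forall N d (b : 'I_n -> nat), (forall i, iter (b i) (tau i) d = 0) ->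
    (\sum_i b i <= N)%N -> nilp X (iota d).
  exact: H _ d b Hb (leqnn _).
elim=> [|N IH] e c Hc Hs;
  (case: (eqVneq e 0) => [->|ne0]; first by rewrite (hom0 iota_hom); exact: nilp0);
  apply: nilp_ad => j;
  (have cj : (0 < c j)%N by
     case E: (c j) => //; move: (Hc j); rewrite E /= => /eqP; rewrite (negbTE ne0));
  (have Hsum : (\sum_i c i = c j + \sum_(i | i != j) c i)%N by rewrite (bigD1 j)).
  by move: Hs; rewrite Hsum leqn0 addn_eq0 => /andP[/eqP E _]; rewrite E in cj.
rewrite ad_iota; apply: nilpM (nilpX j).
pose c' := fun i => if i == j then (c j).-1 else c i.
apply: (IH _ c').
  move=> i; rewrite /c'; case: eqP => [->|_].
    by rewrite -iterSr prednK.
  by rewrite iter_tau_comm Hc tau0.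
have Hsum' : (\sum_i c' i = c' j + \sum_(i | i != j) c' i)%N by rewrite (bigD1 j).
move: Hs; rewrite Hsum Hsum' {1}/c' eqxx.
have -> : (\sum_(i | i != j) c' i = \sum_(i | i != j) c i)%N.
  by apply: eq_bigr => i /negbTE; rewrite /c' => ->.
by rewrite -{1}(prednK cj) addSn ltnS.
Qed.

End Rel.

Lemma nilpY (A : algType K) (iota : D -> A) (X Y : 'I_n -> A) :
  gwa_relations sigma sigmainv a iota X Y ->
  (forall i, locally_nilpotent_map (tau i)) -> forall j, nilp X (Y j).
Proof.
move=> Hr Hln j; apply: nilp_ad => i.
have Hr' := Hr; case: Hr' => Hi [H1 H2 _ _ H5].
case: (eqVneq i j) => [->|ij].
  by rewrite /ad H1 H2; have := nilp_iota Hr Hln (tau j (a j)); rewrite /tau (homB Hi).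
have [_ E _] := H5 i j ij; rewrite /ad E subrr; exact: nilp0.
Qed.

Lemma dir2 (A : algType K) (iota : D -> A) (X Y : 'I_n -> A) :
  is_GWA sigma sigmainv a iota X Y ->
  (forall i, locally_nilpotent_map (tau i)) -> ad_locally_nilpotent X.
Proof.
move=> [Hr HU] Hln; apply: nilp_aln => u.
pose phi' (d : D) : Sn X := exist _ (iota d) (inPn (nilp_iota Hr Hln d)).
pose x' (j : 'I_n) : Sn X := exist _ (X j) (inPn (nilpX Hr j)).
pose y' (j : 'I_n) : Sn X := exist _ (Y j) (inPn (nilpY Hr Hln j)).
have Hr' : gwa_relations sigma sigmainv a phi' x' y'.
  have [[Hi1 Hi2 Hi3 Hi4] [H1 H2 H3 H4 H5]] := Hr.
  split; first split.
  - by move=> d e; apply: val_inj; rewrite /= Hi1.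
  - by move=> d e; apply: val_inj; rewrite /= Hi2.
  - by apply: val_inj; rewrite /= Hi3.
  - by move=> k d; apply: val_inj; rewrite /= Hi4.
  split.
  - by move=> i; apply: val_inj; rewrite /= H1.
  - by move=> i; apply: val_inj; rewrite /= H2.
  - by move=> i d; apply: val_inj; rewrite /= H3.
  - by move=> i d; apply: val_inj; rewrite /= H4.
  - move=> i j ij; have [E1 E2 E3] := H5 i j ij.
    by split; apply: val_inj; rewrite /= ?E1 ?E2 ?E3.
have [[f [Hf Hf1 Hf2 Hf3]] _] := HU _ _ _ _ Hr'.
have [_ Hu] := HU _ _ _ _ Hr.
have Hg : is_alg_hom (fun u => val (f u)).
  split.
  - by move=> p q; rewrite (homD Hf).
  - by move=> p q; rewrite (homM Hf).
  - by rewrite (hom1 Hf).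
  - by move=> k p; rewrite (homZ Hf).
have E : forall u, val (f u) = id u.
  apply: (Hu _ _ Hg (@alg_hom_id _ _)) => //= [d|i|i].
  - by rewrite Hf1.
  - by rewrite Hf2.
  - by rewrite Hf3.
rewrite -(E u); apply: Pnin; exact: valP.
Qed.

End GWA.

Unset Implicit Arguments.

Theorem lemma2p3 (K : fieldType) (D : algType K) (n : nat)
  (sigma sigmainv : 'I_n -> D -> D) (a : 'I_n -> D)
  (A : algType K) (iota : D -> A) (X Y : 'I_n -> A) :
  gwa_data sigma sigmainv a ->
  is_GWA sigma sigmainv a iota X Y ->
  (ad_locally_nilpotent X <->
     (forall i, locally_nilpotent_map (fun d => sigma i d - d))) /\
  (ad_locally_nilpotent Y <->
     (forall i, locally_nilpotent_map (fun d => sigmainv i d - d))).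
Proof.
move=> Hd HG; split.
  by split; [exact: (dir1 Hd HG) | exact: (dir2 Hd HG)].
have Hd' := swap_data Hd; have HG' := swap_GWA Hd HG.
by split; [exact: (dir1 Hd' HG') | exact: (dir2 Hd' HG')].
Qed.
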